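(* Define the relation $\sim$ on $\mathcal{T}$ by $x \sim y \iff \delta(x,y) = 0$ (warping identification). Then $\sim$ is an equivalence relation on $\mathcal{T}$.
   Context: A time series of length $n\ge 1$ is a finite sequence $x=(x_1,\dots,x_n)$ of reals; $\mathcal{T}$ denotes the set of all time series of finite length. For $m,n\in\mathbb{N}$, a warping path of order $m\times n$ and length $\ell$ is a sequence $p=(p_1,\dots,p_\ell)$ of points $p_l=(i_l,j_l)\in[m]\times[n]$ (where $[n]=\{1,\dots,n\}$) with $p_1=(1,1)$, $p_\ell=(m,n)$, and $p_{l+1}-p_l\in\{(1,0),(0,1),(1,1)\}$ for all $l\in[\ell-1]$; $\mathcal{P}_{m,n}$ is the set of such paths. For $x$ of length $m$ and $y$ of length $n$, the cost along $p$ is $C_p(x,y)=\sum_{(i,j)\in p}(x_i-y_j)^2$, and the dtw-distance is $\delta(x,y)=\min\{\sqrt{C_p(x,y)} : p\in\mathcal{P}_{m,n}\}$. *)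

(* Defs.v *)
From Stdlib Require Import Reals List Lra Lia.
Import ListNotations.
Open Scope R_scope.

Definition tseries := list R.
Definition is_tseries (x : tseries) : Prop := (1 <= length x)%nat.

(* 1-based access x_i. *)
Definition at1 (x : tseries) (i : nat) : R := nth (i - 1) x 0.

Definition warp_step (a b : nat * nat) : Prop :=
  (fst b = S (fst a) /\ snd b = snd a) \/
  (fst b = fst a /\ snd b = S (snd a)) \/
  (fst b = S (fst a) /\ snd b = S (snd a)).

Fixpoint warp_steps (p : list (nat * nat)) : Prop :=
  match p with
  | a :: ((b :: _) as q) => warp_step a b /\ warp_steps q
  | _ => True
  end.

Definition warping_path (m n : nat) (p : list (nat * nat)) : Prop :=
  (forall ij, In ij p -> (1 <= fst ij <= m)%nat /\ (1 <= snd ij <= n)%nat) /\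
  head p = Some (1%nat, 1%nat) /\
  last p (0%nat, 0%nat) = (m, n) /\ p <> [] /\
  warp_steps p.

Definition cost (p : list (nat * nat)) (x y : tseries) : R :=
  fold_right (fun ij acc => (at1 x (fst ij) - at1 y (snd ij)) ^ 2 + acc) 0 p.

Definition is_dtw (x y : tseries) (d : R) : Prop :=
  (exists p, warping_path (length x) (length y) p /\ d = sqrt (cost p x y)) /\
  (forall q, warping_path (length x) (length y) q -> d <= sqrt (cost q x y)).

Definition warp_equiv (x y : tseries) : Prop := is_dtw x y 0.

(* Main.v *)
Require Import Defs.
From Stdlib Require Import Reals List Lra Lia.
Import ListNotations.
Open Scope R_scope.

Definition Zero (p : list (nat*nat)) x y := forall ij, In ij p -> at1 x (fst ij) = at1 y (snd ij).
Definition shf (d e : nat) (ij : nat*nat) := (fst ij + d, snd ij + e)%nat.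
Definition ush (d e : nat) (ij : nat*nat) := (fst ij - d, snd ij - e)%nat.

Lemma step_shf d e a b : warp_step (shf d e a) (shf d e b) <-> warp_step a b.
Proof. destruct a, b; unfold warp_step, shf; simpl; lia. Qed.

Lemma steps_cons2 a b p : warp_steps (a :: b :: p) <-> warp_step a b /\ warp_steps (b :: p).
Proof. reflexivity. Qed.

Lemma steps_map d e p : warp_steps (map (shf d e) p) <-> warp_steps p.
Proof.
  induction p as [|a p IH]; [simpl; tauto|].
  destruct p as [|b p]; [simpl; tauto|].
  change (map (shf d e) (a :: b :: p)) with (shf d e a :: shf d e b :: map (shf d e) p).
  rewrite !steps_cons2, step_shf. change (shf d e b :: map (shf d e) p) with (map (shf d e) (b::p)).
  rewrite IH; tauto.
Qed.

Lemma steps_lb p a : warp_steps (a::p) -> forall ij, In ij (a::p) -> (fst a <= fst ij /\ snd a <= snd ij)%nat.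
Proof.
  revert a; induction p as [|b p IH]; intros a H ij Hin.
  - destruct Hin as [<-|[]]; lia.
  - apply steps_cons2 in H as [Hs H]. destruct Hin as [<-|Hin]; [lia|].
    specialize (IH b H ij Hin). unfold warp_step in Hs; lia.
Qed.

Lemma last_map (f : nat*nat -> nat*nat) p d d' : p <> [] -> last (map f p) d' = f (last p d).
Proof.
  induction p as [|a p IH]; [congruence|]; intros _.
  destruct p as [|b p]; [reflexivity|].
  change (last (map f (a::b::p)) d') with (last (map f (b::p)) d').
  rewrite IH by congruence. reflexivity.
Qed.

Lemma cost_zero p x y : Zero p x y -> cost p x y = 0.
Proof.
  induction p as [|a p IH]; intros H; simpl; [reflexivity|].
  rewrite IH. rewrite (H a (or_introl eq_refl)). ring.
  intros ij Hi; apply H; right; exact Hi.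
Qed.

Lemma cost_ge0 p x y : 0 <= cost p x y.
Proof. induction p; simpl; [lra|]. pose proof (pow2_ge_0 (at1 x (fst a) - at1 y (snd a))). lra. Qed.

Lemma zero_cost p x y : cost p x y = 0 -> Zero p x y.
Proof.
  induction p as [|a p IH]; intros H ij Hi; [destruct Hi|]. simpl in H.
  pose proof (pow2_ge_0 (at1 x (fst a) - at1 y (snd a))). pose proof (cost_ge0 p x y).
  destruct Hi as [<-|Hi].
  - assert ((at1 x (fst a) - at1 y (snd a)) ^ 2 = 0) by lra. nra.
  - apply IH; [lra|exact Hi].
Qed.

Lemma weq_iff x y : warp_equiv x y <-> exists p, warping_path (length x) (length y) p /\ Zero p x y.
Proof.
  unfold warp_equiv, is_dtw. split.
  - intros [[p [Hp Hc]] _]. exists p; split; [exact Hp|]. apply zero_cost.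
    symmetry in Hc. apply sqrt_eq_0 in Hc; [exact Hc|apply cost_ge0].
  - intros [p [Hp Hz]]. split.
    + exists p; split; [exact Hp|]. rewrite cost_zero by exact Hz. symmetry; apply sqrt_0.
    + intros; apply sqrt_pos.
Qed.

Lemma last2 (a b : nat*nat) l d : last (a::b::l) d = last (b::l) d.
Proof. reflexivity. Qed.

Lemma ext (d e : nat) X Y X' Y' p :
  warp_step (1,1)%nat (1+d,1+e)%nat ->
  length X' = (length X + d)%nat -> length Y' = (length Y + e)%nat ->
  (forall i, (1<=i)%nat -> at1 X' (i+d) = at1 X i) ->
  (forall i, (1<=i)%nat -> at1 Y' (i+e) = at1 Y i) ->
  at1 X' 1 = at1 Y' 1 ->
  warping_path (length X) (length Y) p -> Zero p X Y ->
  warping_path (length X') (length Y') ((1,1)%nat :: map (shf d e) p) /\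
  Zero ((1,1)%nat :: map (shf d e) p) X' Y'.
Proof.
  intros Hs LX LY AX AY A1 [Hin [Hh [Hl [Hne Hst]]]] Hz.
  destruct p as [|b p]; [congruence|]. simpl in Hh. injection Hh as ->.
  split; [split; [|split; [reflexivity|split; [|split]]]|].
  - pose proof (Hin _ (or_introl eq_refl)) as H11; simpl in H11.
    intros ij [<-|Hi]; [simpl; lia|]. apply in_map_iff in Hi as [k [<- Hk]].
    specialize (Hin k Hk). unfold shf; simpl; lia.
  - change (last ((1,1)%nat :: map (shf d e) ((1,1)%nat :: p)) (0,0)%nat) with
       (last (map (shf d e) ((1,1)%nat :: p)) (0,0)%nat).
    rewrite (last_map _ _ (0,0)%nat) by congruence. rewrite Hl. unfold shf; simpl.
    rewrite LX, LY; reflexivity.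
  - congruence.
  - change (map (shf d e) ((1,1)%nat :: p)) with (shf d e (1,1)%nat :: map (shf d e) p).
    apply steps_cons2; split.
    + unfold shf; simpl. unfold warp_step in *; simpl in *; lia.
    + change (shf d e (1,1)%nat :: map (shf d e) p) with (map (shf d e) ((1,1)%nat :: p)).
      apply steps_map; exact Hst.
  - intros ij [<-|Hi]; [exact A1|]. apply in_map_iff in Hi as [k [<- Hk]].
    destruct (Hin k Hk). unfold shf; simpl. rewrite AX, AY by lia. apply Hz; exact Hk.
Qed.

Lemma unext (d e : nat) X Y X' Y' q :
  warp_step (1,1)%nat (1+d,1+e)%nat ->
  length X' = (length X + d)%nat -> length Y' = (length Y + e)%nat ->
  (forall i, (1<=i)%nat -> at1 X' (i+d) = at1 X i) ->
  (forall i, (1<=i)%nat -> at1 Y' (i+e) = at1 Y i) ->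
  warping_path (length X') (length Y') ((1,1)%nat :: q) -> head q = Some (1+d,1+e)%nat ->
  Zero ((1,1)%nat :: q) X' Y' ->
  warping_path (length X) (length Y) (map (ush d e) q) /\ Zero (map (ush d e) q) X Y.
Proof.
  intros Hs LX LY AX AY [Hin [_ [Hl [_ Hst]]]] Hh Hz.
  destruct q as [|b q]; [discriminate|]. cbn [head] in Hh. injection Hh as ->.
  apply steps_cons2 in Hst as [_ Hst].
  pose proof (steps_lb _ _ Hst) as Lb. simpl in Lb.
  assert (HI : forall ij, In ij ((1+d,1+e)%nat :: q) ->
     (1 + d <= fst ij <= length X' /\ 1 + e <= snd ij <= length Y')%nat).
  { intros ij Hij. specialize (Lb ij Hij). specialize (Hin ij (or_intror Hij)). lia. }
  assert (Hsh : map (shf d e) (map (ush d e) ((1+d,1+e)%nat :: q)) = (1+d,1+e)%nat :: q).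
  { rewrite map_map. rewrite <- (map_id ((1+d,1+e)%nat :: q)) at 2. apply map_ext_in.
    intros [i j] Hij. apply HI in Hij. unfold shf, ush; simpl in *. f_equal; lia. }
  split; [split; [|split; [|split; [|split]]]|].
  - intros ij Hi. apply in_map_iff in Hi as [k [<- Hk]]. apply HI in Hk. unfold ush; simpl; lia.
  - unfold ush. cbn [map head fst snd]. f_equal. f_equal; lia.
  - rewrite (last_map _ _ (0,0)%nat) by congruence.
    rewrite last2 in Hl. rewrite Hl. unfold ush; cbn [fst snd]. f_equal; lia.
  - simpl; congruence.
  - apply (steps_map d e). change (S d) with (1+d)%nat; change (S e) with (1+e)%nat. rewrite Hsh. exact Hst.
  - intros ij Hi. apply in_map_iff in Hi as [k [<- Hk]]. pose proof (HI k Hk) as Hb.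
    specialize (Hz k (or_intror Hk)). destruct k as [i j]; unfold ush; simpl in *.
    rewrite <- AX, <- AY by lia. replace (i - d + d)%nat with i by lia.
    replace (j - e + e)%nat with j by lia. exact Hz.
Qed.

Inductive Zrel : list R -> list R -> Prop :=
| Zb a : Zrel [a] [a]
| ZI a x y : Zrel x (a::y) -> Zrel (a::x) (a::y)
| ZJ a x y : Zrel (a::x) y -> Zrel (a::x) (a::y)
| ZB a x y : Zrel x y -> Zrel (a::x) (a::y).

Lemma Zrel_ne x y : Zrel x y -> x <> [] /\ y <> [].
Proof. destruct 1; split; congruence. Qed.

Lemma Zrel_hd a b x y : Zrel (a::x) (b::y) -> a = b.
Proof. inversion 1; reflexivity. Qed.

Lemma Zrel_sym x y : Zrel x y -> Zrel y x.
Proof. induction 1; constructor; assumption. Qed.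

Lemma Zrel_refl x : x <> [] -> Zrel x x.
Proof.
  induction x as [|a x IH]; [congruence|]; intros _.
  destruct x as [|b x]; [constructor|]. apply ZB, IH; congruence.
Qed.

Lemma Zrel_trans_n n : forall x y z, (length x + length y + length z <= n)%nat ->
  Zrel x y -> Zrel y z -> Zrel x z.
Proof.
  induction n as [|n IH]; intros x y z Hn H1 H2.
  - destruct H1; simpl in Hn; lia.
  - destruct H1 as [a|a x y H|a x y H|a x y H].
    + exact H2.
    + destruct z as [|c z]; [destruct (Zrel_ne _ _ H2); congruence|].
      pose proof (Zrel_hd _ _ _ _ H2); subst c. apply ZI.
      apply (IH x (a::y) (a::z)); [simpl in *; lia|exact H|exact H2].
    + inversion H2; subst.
      * destruct (Zrel_ne _ _ H); congruence.
      * apply (IH (a::x) y _); [simpl in *; lia|exact H|assumption].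
      * apply ZJ. apply (IH (a::x) (a::y) _); [simpl in *; lia|apply ZJ; exact H|assumption].
      * apply ZJ. apply (IH (a::x) y _); [simpl in *; lia|exact H|assumption].
    + inversion H2; subst.
      * destruct (Zrel_ne _ _ H); congruence.
      * apply ZI. apply (IH x y _); [simpl in *; lia|exact H|assumption].
      * apply ZJ. apply (IH (a::x) (a::y) _); [simpl in *; lia|apply ZB; exact H|assumption].
      * apply ZB. apply (IH x y _); [simpl in *; lia|exact H|assumption].
Qed.

Lemma at1_cons a x i : (1 <= i)%nat -> at1 (a::x) (i+1) = at1 x i.
Proof. intros Hi. unfold at1. destruct i; [lia|]. replace (S i + 1 - 1)%nat with (S i) by lia.
  simpl. rewrite Nat.sub_0_r. reflexivity. Qed.

Lemma at1_0 x i : at1 x (i+0) = at1 x i.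
Proof. rewrite Nat.add_0_r; reflexivity. Qed.

Lemma Zrel_path x y : Zrel x y -> exists p, warping_path (length x) (length y) p /\ Zero p x y.
Proof.
  induction 1 as [a|a x y H [p [Hp Hz]]|a x y H [p [Hp Hz]]|a x y H [p [Hp Hz]]].
  - exists [(1,1)%nat]. split.
    + split; [|split; [reflexivity|split; [reflexivity|split; [congruence|exact I]]]].
      intros ij [<-|[]]; simpl; lia.
    + intros ij [<-|[]]; reflexivity.
  - eexists; eapply (ext 1 0 x (a::y) (a::x) (a::y) p); try eassumption;
      try (intros; first [apply at1_cons | apply at1_0]; assumption); try reflexivity.
    + unfold warp_step; simpl; lia.
    + simpl; lia.
    + simpl; lia.
  - eexists; eapply (ext 0 1 (a::x) y (a::x) (a::y) p); try eassumption;
      try (intros; first [apply at1_cons | apply at1_0]; assumption); try reflexivity.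
    + unfold warp_step; simpl; lia.
    + simpl; lia.
    + simpl; lia.
  - eexists; eapply (ext 1 1 x y (a::x) (a::y) p); try eassumption;
      try (intros; first [apply at1_cons | apply at1_0]; assumption); try reflexivity.
    + unfold warp_step; simpl; lia.
    + simpl; lia.
    + simpl; lia.
Qed.

Lemma path_Zrel_n n : forall p x y, (length p <= n)%nat ->
  warping_path (length x) (length y) p -> Zero p x y -> Zrel x y.
Proof.
  induction n as [|n IH]; intros p x y Hn Hp Hz.
  - destruct Hp as [_ [_ [_ [Hne _]]]]. destruct p; [congruence|simpl in Hn; lia].
  - pose proof Hp as [Hin [Hh [Hl [Hne Hst]]]].
    destruct p as [|o q]; [congruence|]. cbn [head] in Hh. injection Hh as ->.
    pose proof (Hz _ (or_introl eq_refl)) as H11.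
    pose proof (Hin _ (or_introl eq_refl)) as R11. cbn [fst snd] in R11.
    destruct x as [|a x]; [simpl in R11; lia|]. destruct y as [|c y]; [simpl in R11; lia|].
    cbn [fst snd] in H11. change (a = c) in H11. subst c.
    destruct q as [|b q].
    + simpl in Hl. injection Hl as E1 E2.
      destruct x; [|simpl in E1; lia]. destruct y; [|simpl in E2; lia]. constructor.
    + pose proof (Hin b (or_intror (or_introl eq_refl))) as Rb.
      apply steps_cons2 in Hst as [Hs _].
      destruct b as [i j]. unfold warp_step in Hs; cbn [fst snd] in Hs.
      destruct Hs as [[-> ->]|[[-> ->]|[-> ->]]]; cbn [fst snd] in Rb.
      * destruct x as [|a' x]; [simpl in Rb; lia|].
        edestruct (unext 1 0 (a'::x) (a::y) (a::a'::x) (a::y) ((2,1)%nat::q)) as [Hp' Hz'];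
          try eassumption; try reflexivity;
          try (intros; first [apply at1_cons | apply at1_0]; assumption).
        { unfold warp_step; simpl; lia. }
        { simpl; lia. }
        { simpl; lia. }
        apply ZI. eapply IH; [|exact Hp'|exact Hz']. rewrite length_map. simpl in *; lia.
      * destruct y as [|a' y]; [simpl in Rb; lia|].
        edestruct (unext 0 1 (a::x) (a'::y) (a::x) (a::a'::y) ((1,2)%nat::q)) as [Hp' Hz'];
          try eassumption; try reflexivity;
          try (intros; first [apply at1_cons | apply at1_0]; assumption).
        { unfold warp_step; simpl; lia. }
        { simpl; lia. }
        { simpl; lia. }
        apply ZJ. eapply IH; [|exact Hp'|exact Hz']. rewrite length_map. simpl in *; lia.
      * destruct x as [|a' x]; [simpl in Rb; lia|].
        destruct y as [|a'' y]; [simpl in Rb; lia|].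
        edestruct (unext 1 1 (a'::x) (a''::y) (a::a'::x) (a::a''::y) ((2,2)%nat::q)) as [Hp' Hz'];
          try eassumption; try reflexivity;
          try (intros; first [apply at1_cons | apply at1_0]; assumption).
        { unfold warp_step; simpl; lia. }
        { simpl; lia. }
        { simpl; lia. }
        apply ZB. eapply IH; [|exact Hp'|exact Hz']. rewrite length_map. simpl in *; lia.
Qed.

Lemma weq_Zrel x y : warp_equiv x y <-> Zrel x y.
Proof.
  rewrite weq_iff. split.
  - intros [p [Hp Hz]]. eapply path_Zrel_n; [apply le_n|exact Hp|exact Hz].
  - apply Zrel_path.
Qed.

Theorem proposition1 :
  (forall x, is_tseries x -> warp_equiv x x) /\
  (forall x y, is_tseries x -> is_tseries y -> warp_equiv x y -> warp_equiv y x) /\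
  (forall x y z, is_tseries x -> is_tseries y -> is_tseries z ->
     warp_equiv x y -> warp_equiv y z -> warp_equiv x z).
Proof.
  split; [|split].
  - intros x Hx. apply weq_Zrel, Zrel_refl. unfold is_tseries in Hx. destruct x; simpl in Hx; [lia|congruence].
  - intros x y _ _ H. apply weq_Zrel, Zrel_sym, weq_Zrel, H.
  - intros x y z _ _ _ H1 H2. apply weq_Zrel in H1, H2. apply weq_Zrel.
    eapply Zrel_trans_n; [apply le_n|exact H1|exact H2].
Qed.
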